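(* Let $G$ be a Polish group and $\Gamma$ a countable abelian group, and identify $\Gamma$ with the subgroup $\Gamma\times\{0\}$ of $\Gamma\times\mathbb{Z}$. Assume that for a dense set of $\pi \in \mathrm{Hom}(\Gamma \times \mathbb{Z}, G)$ one has $\overline{\pi(\Gamma \times \mathbb{Z})} = \overline{\pi(\Gamma)}$. Then the restriction map $\mathrm{Res} \colon \mathrm{Hom}(\Gamma \times \mathbb{Z}, G) \to \mathrm{Hom}(\Gamma, G)$ is category-preserving.
   Context: $\mathrm{Hom}(\Lambda,G)$ is the space of homomorphisms $\Lambda\to G$ with the topology from $G^\Lambda$. A continuous map $f\colon X\to Y$ between Polish spaces is category-preserving if $f^{-1}(A)$ is comeager in $X$ whenever $A$ is comeager in $Y$. *)

(* Defs.v *)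
From HB Require Import structures.
From mathcomp Require Import all_boot all_order all_algebra.
From mathcomp Require Import monoid.
From mathcomp Require Import all_classical all_reals topology normedtype.
From mathcomp Require Import Rstruct Rstruct_topology.

Set Implicit Arguments.
Unset Strict Implicit.
Unset Printing Implicit Defensive.

Import Order.TTheory GRing.Theory Num.Theory.
Local Open Scope classical_set_scope.
Local Open Scope ring_scope.

#[short(type="topGroupType")]
HB.structure Definition TopGroup := {G of Group G & Topological G}.

Definition topological_group (G : topGroupType) : Prop :=
  continuous (fun p : G * G => (p.1 * p.2)%g) /\
  continuous (fun x : G => (x^-1)%g).

Definition separable_space (T : topologicalType) : Prop :=
  exists D : set T, countable D /\ dense D.

Definition is_metric (T : Type) (d : T -> T -> Rdefinitions.R) : Prop :=
  [/\ (forall x y, 0 <= d x y),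
      (forall x y, d x y = 0 <-> x = y),
      (forall x y, d x y = d y x) &
      (forall x y z, d x z <= d x y + d y z)].

Definition completely_metrizable (T : topologicalType) : Prop :=
  exists d : T -> T -> Rdefinitions.R,
    [/\ is_metric d,
        (forall A : set T, open A <->
            (forall x, A x -> exists e, 0 < e /\ [set y | d x y < e] `<=` A)) &
        (forall u : nat -> T,
            (forall e, 0 < e -> exists N : nat, forall m n : nat,
                 (N <= m)%N -> (N <= n)%N -> d (u m) (u n) < e) ->
            exists l : T, u @ \oo --> l)].

Definition polish_space (T : topologicalType) : Prop :=
  separable_space T /\ completely_metrizable T.

Definition polish_group (G : topGroupType) : Prop :=
  topological_group G /\ polish_space G.

Definition nowhere_dense (T : topologicalType) (A : set T) : Prop :=
  interior (closure A) = set0.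

Definition meager (T : topologicalType) (A : set T) : Prop :=
  exists F : nat -> set T,
    (forall n, nowhere_dense (F n)) /\ A `<=` \bigcup_n F n.

Definition comeager (T : topologicalType) (A : set T) : Prop :=
  meager (~` A).

Definition category_preserving (X Y : topologicalType) (f : X -> Y) : Prop :=
  forall A : set Y, comeager A -> comeager (f @^-1` A).

(* Hom(L, G) as a subset of G^L with the product (pointwise) topology;
   as a space we use the subspace (sigma-type) topology [set_type]. *)
Definition hom_set (L : zmodType) (G : topGroupType) : set {ptws L -> G} :=
  [set f : L -> G | forall x y : L, f (x + y) = (f x * f y)%g].
Arguments hom_set : clear implicits.

Notation HomSp L G := (set_type (hom_set L G)).

Lemma res_hom_proof (Gam : zmodType) (G : topGroupType)
  (f : set_type (hom_set (Gam * int)%type G)) :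
  hom_set Gam G (fun g : Gam => (val f) (g, 0%R)).
Proof.
move=> x y /=; have := set_valP f => /(_ (x, 0%R) (y, 0%R)) /= <-.
congr (sval f _); apply: pair_equal_spec; split => //.
Qed.

Definition Res (Gam : zmodType) (G : topGroupType)
  (f : HomSp (Gam * int)%type G) : HomSp Gam G :=
  exist _ (fun g : Gam => (val f) (g, 0%R)) (mem_set (res_hom_proof f)) : HomSp Gam G.

(* Main.v *)
Require Import Defs.
From HB Require Import structures.
From mathcomp Require Import all_boot all_order all_algebra.
From mathcomp Require Import monoid.
From mathcomp Require Import all_classical all_reals topology normedtype.
Local Open Scope classical_set_scope.
Local Open Scope ring_scope.
Import GRing.Theory.

Lemma ptws_cvg {I : eqType} {K : topologicalType} (F : set_system (I -> K))
  {FF : Filter F} (f : {ptws I -> K}) :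
  (forall i, (fun g => g i) @ F --> f i) -> F --> f.
Proof.
move=> H; apply/cvg_sup => i U [V] [[W] oW <-] WfN WU.
apply: (filterS WU); apply: (H i); exact: open_nbhs_nbhs.
Qed.

Section T.
Variable G : topGroupType.
Hypothesis Hmul : continuous (fun p : G * G => (p.1 * p.2)%g).
Hypothesis Hinv : continuous (fun x : G => (x^-1)%g).

Lemma mul_cvg {T} (F : set_system T) {FF : Filter F} (f g : T -> G) a b :
  f @ F --> a -> g @ F --> b -> (fun x => f x * g x)%g @ F --> (a * b)%g.
Proof.
move=> fa gb; exact: (@continuous2_cvg _ _ _ _ F FF f g (fun u v : G => (u * v)%g) a b (Hmul (a, b)) fa gb).
Qed.

Lemma expg_cont k : continuous (fun h : G => (h ^+ k)%g).
Proof.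
elim: k => [|k IH] x.
  exact: cvg_cst.
have e : (fun h : G => (h ^+ k.+1)%g) = (fun h => h * h ^+ k)%g.
  by apply: funext => h; rewrite monoid.expgS.
rewrite e; apply: mul_cvg; [exact: cvg_id | exact: IH].
Qed.
Definition pw (h : G) (n : int) : G :=
  match n with Posz k => (h ^+ k)%g | Negz k => ((h ^+ k.+1)^-1)%g end.
Lemma pw_cont n : continuous (fun h : G => pw h n).
Proof.
case: n => k x /=; first exact: expg_cont.
apply: (@continuous_comp _ _ _ (fun h : G => (h ^+ k.+1)%g) (fun h : G => (h^-1)%g)).
  exact: expg_cont.
exact: Hinv.
Qed.
Variable Gam : zmodType.
Definition Phi (p : G * {ptws Gam -> G}) : {ptws (Gam * int)%type -> G} :=
  fun x => (p.2 x.1 * pw p.1 x.2)%g.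
Lemma Phi_cont : continuous Phi.
Proof.
move=> p; apply: (@ptws_cvg _ _ (Phi @ nbhs p) _ (Phi p)) => x /=; apply: mul_cvg => //.
  apply: (@continuous_comp _ _ _ snd (fun f : {ptws Gam -> G} => f x.1)).
    exact: cvg_snd.
  exact: proj_continuous.
apply: (@continuous_comp _ _ _ fst (fun h : G => pw h x.2)).
  exact: cvg_fst.
exact: pw_cont.
Qed.
End T.
Section Alg.
Variable G : topGroupType.
Variable L : zmodType.
Variable phi : L -> G.
Hypothesis Hphi : forall x y : L, phi (x + y) = (phi x * phi y)%g.

Lemma hom0 : phi 0 = 1%g.
Proof.
have := Hphi 0 0; rewrite addr0 => h.
by apply: (@monoid.mulIg _ (phi 0)); rewrite monoid.mul1g -h.
Qed.

Lemma homN x : phi (- x) = ((phi x)^-1)%g.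
Proof.
apply/esym/monoid.mulg1_eq; rewrite -Hphi subrr; exact: hom0.
Qed.

Lemma homMn x k : phi (x *+ k) = (phi x ^+ k)%g.
Proof.
elim: k => [|k IH]; first by rewrite mulr0n hom0.
by rewrite mulrS Hphi IH monoid.expgS.
Qed.

Lemma homMz x n : phi (x *~ n) = @pw G (phi x) n.
Proof.
case: n => k /=; first by rewrite -homMn.
by rewrite NegzE mulrNz homN -pmulrn homMn.
Qed.
End Alg.
Arguments pw {G}.
Arguments Phi {G Gam}.
Arguments Phi_cont {G} Hmul Hinv {Gam}.
Arguments homMz {G L phi}.
Section K.
Variable G : topGroupType.
Hypothesis Hmul : continuous (fun p : G * G => (p.1 * p.2)%g).
Hypothesis Hinv : continuous (fun x : G => (x^-1)%g).
Variable Gam : zmodType.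

Lemma key (pi : HomSp (Gam * int)%type G) (U : set (HomSp (Gam * int)%type G)) :
  open U -> U pi ->
  closure (range (val pi)) = closure (range (fun g : Gam => (val pi) (g, 0))) ->
  exists2 V : set (HomSp Gam G), open V /\ V (Res pi) &
     forall rho, V rho -> exists2 sigma, U sigma & Res sigma = rho.
Proof.
move=> [W oW WU] Upi Hcl.
have hpi := set_valP pi.
set g := val pi (0, 1).
set p0 : {ptws Gam -> G} := fun x => val pi (x, 0).
have PhiE : Phi (g, p0) = val pi.
  apply: funext => -[x n]; rewrite /Phi /=.
  have -> : pw g n = val pi (0, n).
    pose phi := fun m : int => val pi (0, m).
    have Hphi : forall a b, phi (a + b) = (phi a * phi b)%g.
      move=> a b; rewrite /phi -hpi; congr (val pi _).
      by change ((0, a + b) = (0 + 0, a + b) :> Gam * int); rewrite addr0.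
    by rewrite /g; have := homMz Hphi 1 n; rewrite intz => <-.
  rewrite /p0 -hpi; congr (val pi _).
  by change ((x + 0, 0 + n) = (x, n) :> Gam * int); rewrite addr0 add0r.
have Wpi : W (val pi) by rewrite -WU in Upi.
have : nbhs (g, p0) (Phi @^-1` W).
  apply: (Phi_cont Hmul Hinv); rewrite PhiE; exact: open_nbhs_nbhs.
case=> -[A B] /= [nA nB] AB.
move: nA; rewrite nbhsE => -[A' [oA' A'g] A'A].
move: nB; rewrite nbhsE => -[B' [oB' B'p] B'B].
have : closure (range p0) g.
  rewrite /p0 -Hcl; apply: subset_closure; by exists (0, 1).
move=> /(_ A' (open_nbhs_nbhs (conj oA' A'g))) [_ [[d _ <-] A'd]].
exists (set_val @^-1` (B' `&` (fun f : {ptws Gam -> G} => f d) @^-1` A')).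
  split; last by split.
  exists (B' `&` (fun f : {ptws Gam -> G} => f d) @^-1` A') => //.
  apply: openI => //; exact: ((@continuousP {ptws Gam -> G} G (fun f => f d)).1 (@proj_continuous _ (fun=> G) d) A' oA').
move=> rho [Brho Arho].
have hrho := set_valP rho.
pose s := fun x : Gam * int => val rho (x.1 + d *~ x.2).
have hs : hom_set (Gam * int)%type G s.
  move=> x y; rewrite /s -hrho; congr (val rho _).
  by rewrite /= mulrzDr addrACA.
exists (exist _ s (mem_set hs)).
  rewrite -WU; change (W s).
  have -> : s = Phi (val rho d, val rho).
    apply: funext => -[x n]; rewrite /s /Phi /= hrho homMz //.
  apply: AB; split; [exact: A'A | exact: B'B].
by apply: val_inj; apply: funext => x /=; rewrite /s /= mulr0z addr0.
Qed.
End K.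
Lemma Res_cont (G : topGroupType) (Gam : zmodType) : continuous (@Res Gam G).
Proof.
apply: continuous_comp_initial => f.
apply: (@ptws_cvg _ _ ((set_val \o @Res Gam G) @ nbhs f) _ (set_val (Res f))) => x /=.
apply: (@continuous_comp _ _ _ set_val (fun h : {ptws (Gam * int)%type -> G} => h (x, 0))).
  exact: initial_continuous.
exact: proj_continuous.
Qed.

Theorem lemma8p7 (G : topGroupType) (Gam : countZmodType) :
  polish_group G ->
  dense [set pi : HomSp (Gam * int)%type G |
           closure (range (val pi)) =
           closure (range (fun g : Gam => (val pi) (g, 0%R)))] ->
  category_preserving (@Res Gam G).
Proof.
move=> [[Hmul Hinv] _] Hd A [F [Fnd AF]].
exists (fun n => @Res Gam G @^-1` F n); split; last first.
  by move=> x /= nAx; apply: AF.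
move=> n; rewrite /nowhere_dense -subset0 => x Hx.
set U := interior (closure (@Res Gam G @^-1` F n)).
have oU : open U := @open_interior _ _.
have [pi [Upi Dpi]] := Hd U (ex_intro _ x Hx) oU.
have [V [oV Vpi] HV] := @key G Hmul Hinv Gam pi U oU Upi Dpi.
have [rho [Vrho nFrho]] : exists rho, V rho /\ ~ closure (F n) rho.
  apply: contrapT => H.
  have VF : V `<=` closure (F n).
    by move=> r Vr; apply: contrapT => nc; apply: H; exists r.
  have : interior (closure (F n)) (Res pi).
    by apply: (interiorS VF); rewrite ((interior_id V).1 oV).
  by rewrite (Fnd n).
have [sigma Us sE] := HV rho Vrho.
apply: nFrho => B nB.
have Uc : closure (@Res Gam G @^-1` F n) sigma := interior_subset Us.
have nB' : nbhs (Res sigma) B by rewrite sE.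
have [s [Fs Bs]] := Uc (@Res Gam G @^-1` B) (@Res_cont G Gam sigma B nB').
by exists (Res s).
Qed.
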